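(* Let $\Omega$ be a verification operator for $|\Psi\rangle$ with second largest eigenvalue $\beta$ and smallest eigenvalue $\tau$, and $N\ge1$ an integer. Then $\eta(N,0,\Omega)=\delta_{\mathrm c}$, where $\delta_{\mathrm c}=\beta^N$ if $\tau>0$ and $\delta_{\mathrm c}=\max\{\beta^N,1/(N+1)\}$ if $\tau=0$.
   Context: Let $\mathcal H$ be a Hilbert space of finite dimension $D\ge2$ and $|\Psi\rangle\in\mathcal H$ a unit vector. A verification operator for $|\Psi\rangle$ is a Hermitian operator $\Omega$ on $\mathcal H$ with $0\le\Omega\le1$, $\Omega|\Psi\rangle=|\Psi\rangle$, whose eigenvalue $1$ is nondegenerate. For a density operator $\rho$ on $\mathcal H^{\otimes(N+1)}$ put $p_\rho=\mathrm{tr}[(\Omega^{\otimes N}\otimes1)\rho]$ and $f_\rho=\mathrm{tr}[(\Omega^{\otimes N}\otimes|\Psi\rangle\langle\Psi|)\rho]$, and for $0\le f\le1$ let $\eta(N,f,\Omega)=\max\{p_\rho:f_\rho\le f\}$, the maximum over permutation-invariant density operators on $\mathcal H^{\otimes(N+1)}$. *)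

(* Defs.v *)
(* Operators on H = C^D are D x D matrices;
   operators on H^{(x)(N+1)} are represented by their kernels T -> T -> C,
   where T = {ffun 'I_(N+1) -> 'I_D} is the computational basis of the tensor
   power (basis vector |x_0 ... x_N>, factor N being the last one). *)
From HB Require Import structures.
From mathcomp Require Import all_boot all_order all_algebra.
From mathcomp Require Import fingroup perm.
From mathcomp Require Import complex.
Set Implicit Arguments. Unset Strict Implicit. Unset Printing Implicit Defensive.
Import Order.TTheory GRing.Theory Num.Theory.
Local Open Scope ring_scope.

Section Defs.
Variable R : rcfType.
Local Notation C := (R[i]).

Definition adj m n (A : 'M[C]_(m, n)) : 'M[C]_(n, m) :=
  \matrix_(i, j) (A j i)^*.

Definition verification_operator D (Om : 'M[C]_D) (psi : 'cV[C]_D) : Prop :=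
  [/\ (adj psi *m psi) 0 0 = 1,
      adj Om = Om,
      (forall v : 'cV[C]_D,
          0 <= (adj v *m Om *m v) 0 0 <= (adj v *m v) 0 0),
      Om *m psi = psi &
      (forall v : 'cV[C]_D, Om *m v = v -> exists c : C, v = c *: psi)].

Definition tidx D N := {ffun 'I_N.+1 -> 'I_D}.

(* kernel of the operator A^{(x)N} (x) B on H^{(x)(N+1)} *)
Definition tens_last D N (A B : 'M[C]_D) (x y : tidx D N) : C :=
  (\prod_(i < N.+1 | i != ord_max) A (x i) (y i)) * B (x ord_max) (y ord_max).

Definition trK D N (K rho : tidx D N -> tidx D N -> C) : C :=
  \sum_x \sum_y K x y * rho y x.

Definition density D N (rho : tidx D N -> tidx D N -> C) : Prop :=
  [/\ (forall x y, rho y x = (rho x y)^*),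
      (forall v : tidx D N -> C,
          0 <= \sum_x \sum_y (v x)^* * rho x y * v y) &
      \sum_x rho x x = 1].

Definition permute_idx D N (s : 'S_N.+1) (x : tidx D N) : tidx D N :=
  [ffun i => x (s i)].

Definition perm_invariant D N (rho : tidx D N -> tidx D N -> C) : Prop :=
  forall (s : 'S_N.+1) x y, rho (permute_idx s x) (permute_idx s y) = rho x y.

Definition p_rho D N (Om : 'M[C]_D) rho : C := trK (@tens_last D N Om 1%:M) rho.

Definition f_rho D N (Om : 'M[C]_D) (psi : 'cV[C]_D) rho : C :=
  trK (@tens_last D N Om (psi *m adj psi)) rho.

Definition is_eta D N (Om : 'M[C]_D) (psi : 'cV[C]_D) (f v : C) : Prop :=
  (exists rho, [/\ density rho, perm_invariant rho,
                   @f_rho D N Om psi rho <= f & @p_rho D N Om rho = v]) /\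
  (forall rho, density rho -> perm_invariant rho ->
               @f_rho D N Om psi rho <= f -> @p_rho D N Om rho <= v).

(* beta is the second largest eigenvalue (largest eigenvalue other than the
   nondegenerate eigenvalue 1) and tau the smallest eigenvalue of Omega *)
Definition second_largest_eigenvalue D (Om : 'M[C]_D) (beta : C) : Prop :=
  [/\ eigenvalue Om beta, beta != 1 &
      forall a, eigenvalue Om a -> a != 1 -> a <= beta].

Definition smallest_eigenvalue D (Om : 'M[C]_D) (tau : C) : Prop :=
  eigenvalue Om tau /\ forall a, eigenvalue Om a -> tau <= a.

Definition delta_c (N : nat) (beta tau : C) : C :=
  if 0 < tau then beta ^+ N
  else if beta ^+ N <= (N.+1)%:R^-1 then (N.+1)%:R^-1 else beta ^+ N.

End Defs.
Arguments is_eta {R D} N Om psi f v.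

(* Main.v *)
Require Import Defs.
From HB Require Import structures.
From mathcomp Require Import all_boot all_order all_algebra.
From mathcomp Require Import fingroup perm.
From mathcomp Require Import complex.
From mathcomp Require Import ring.
From mathcomp Require Import sesquilinear spectral.
Set Implicit Arguments. Unset Strict Implicit. Unset Printing Implicit Defensive.
Import Order.TTheory GRing.Theory Num.Theory.
Local Open Scope ring_scope.


Section Tensor.
Variable R : rcfType.
Local Notation C := (R[i]).
Variables (D N : nat).
Local Notation T := (tidx D N).
Variable e : 'I_D -> 'I_D -> C.
Hypothesis e_orth : forall j l, \sum_a (e j a)^* * e l a = (j == l)%:R.

Definition uvec (k : T) (x : T) : C := \prod_i e (k i) (x i).

Definition Qf (rho : T -> T -> C) (w : T -> C) : C :=
  \sum_x \sum_y (w x)^* * rho x y * w y.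

Lemma prod_decomp (d : 'I_N.+1 -> 'I_D -> C) (M : 'I_N.+1 -> 'I_D -> 'I_D -> C) (x y : T) :
  (forall i a b, M i a b = \sum_j d i j * e j a * (e j b)^*) ->
  \prod_i M i (x i) (y i) =
  \sum_(k : T) (\prod_i d i (k i)) * uvec k x * (uvec k y)^*.
Proof.
move=> HM; rewrite (eq_bigr (fun i => \sum_j d i j * e j (x i) * (e j (y i))^*)); last first.
  by move=> i _; rewrite HM.
rewrite bigA_distr_bigA /=; apply: eq_bigr => k _.
by rewrite /uvec rmorph_prod -!big_split.
Qed.

Lemma tens_last_prod (A B : 'M[C]_D) (x y : T) :
  tens_last A B x y = \prod_i (if i == ord_max then B else A) (x i) (y i).
Proof.
rewrite /tens_last [in RHS](bigD1 ord_max) //= eqxx mulrC; congr (_ * _).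
by apply: eq_bigr => i /negbTE ->.
Qed.

Lemma trK_decomp (K : T -> T -> C) (c : T -> C) rho :
  (forall x y, K x y = \sum_(k : T) c k * uvec k x * (uvec k y)^*) ->
  trK K rho = \sum_(k : T) c k * Qf rho (uvec k).
Proof.
move=> HK; rewrite /trK /Qf.
under eq_bigr do under eq_bigr do rewrite HK mulr_suml.
under eq_bigr do rewrite exchange_big.
rewrite exchange_big; apply: eq_bigr => k _.
rewrite mulr_sumr exchange_big; apply: eq_bigr => y _.
rewrite mulr_sumr; apply: eq_bigr => x _.
by rewrite -!mulrA; congr (_ * _); rewrite mulrC -mulrA.
Qed.

Lemma uvec_orth l k : \sum_x (uvec l x)^* * uvec k x = (l == k)%:R.
Proof.
rewrite /uvec.
under eq_bigr do rewrite rmorph_prod -big_split /=.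
rewrite -(bigA_distr_bigA (fun i a => (e (l i) a)^* * e (k i) a)) /=.
under eq_bigr do rewrite e_orth.
case: (eqVneq l k) => [->|nlk].
  by rewrite big1 // => i _; rewrite eqxx.
have [i Hi] : exists i, l i != k i.
  by apply/existsP; rewrite -negb_forall; apply: contra nlk => /forallP H; apply/eqP/ffunP => i; apply/eqP; exact: H.
by rewrite (bigD1 i) //= (negbTE Hi) mul0r.
Qed.

Lemma permute_idx_inj (s : 'S_N.+1) : injective (@permute_idx D N s).
Proof.
move=> x y /ffunP H; apply/ffunP => j; move: (H (s^-1 j)%g).
by rewrite !ffunE permKV.
Qed.

Lemma uvec_perm s k x : uvec (permute_idx s k) (permute_idx s x) = uvec k x.
Proof.
rewrite /uvec (reindex_inj (@perm_inj _ s^-1)%g) /=.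
by apply: eq_bigr => i _; rewrite !ffunE permKV.
Qed.

Lemma Qf_perm rho s k : perm_invariant rho ->
  Qf rho (uvec (permute_idx s k)) = Qf rho (uvec k).
Proof.
move=> Hr; rewrite /Qf (reindex_inj (@permute_idx_inj s)) /=.
apply: eq_bigr => x _; rewrite (reindex_inj (@permute_idx_inj s)) /=.
by apply: eq_bigr => y _; rewrite Hr !uvec_perm.
Qed.


Definition diagst (w : T -> C) (x y : T) : C :=
  \sum_(l : T) w l * uvec l x * (uvec l y)^*.

Definition sco (v : T -> C) (l : T) : C := \sum_x (v x)^* * uvec l x.

Lemma Qf_diag w v : Qf (diagst w) v = \sum_(l : T) w l * (sco v l * (sco v l)^*).
Proof.
rewrite /Qf /diagst /sco.
have E : forall l, w l * ((\sum_x (v x)^* * uvec l x) * (\sum_x (v x)^* * uvec l x)^*)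
   = \sum_x \sum_y w l * ((v x)^* * uvec l x) * ((uvec l y)^* * v y).
  move=> l; rewrite rmorph_sum mulr_suml mulr_sumr; apply: eq_bigr => x _.
  rewrite mulr_sumr mulr_sumr; apply: eq_bigr => y _.
  by rewrite rmorphM /= conjCK -!mulrA [v y * _]mulrC.
rewrite [RHS](eq_bigr _ (fun l _ => E l)).
rewrite [RHS]exchange_big; apply: eq_bigr => x _.
rewrite [RHS]exchange_big; apply: eq_bigr => y _.
rewrite mulr_sumr mulr_suml; apply: eq_bigr => l _.
by ring.
Qed.

Lemma sco_uvec k l : sco (uvec k) l = (k == l)%:R.
Proof. exact: uvec_orth. Qed.

Lemma Qf_diag_uvec w k : Qf (diagst w) (uvec k) = w k.
Proof.
rewrite Qf_diag (bigD1 k) //= big1 ?addr0.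
  by rewrite sco_uvec eqxx conjC1 !mulr1.
by move=> l /negbTE nl; rewrite sco_uvec eq_sym nl mul0r mulr0.
Qed.

Lemma diagst_density (w : T -> C) :
  (forall k, 0 <= w k) -> \sum_k w k = 1 -> density (diagst w).
Proof.
move=> w0 w1; split.
- move=> x y; rewrite /diagst rmorph_sum; apply: eq_bigr => l _.
  rewrite !rmorphM /= conjCK (geC0_conj (w0 l)); by rewrite -!mulrA [_ * uvec l y]mulrC.
- move=> v; rewrite (_ : \sum_x _ = Qf (diagst w) v) // Qf_diag; apply: sumr_ge0 => l _.
  by apply: mulr_ge0 => //; apply: mul_conjC_ge0.
- rewrite /diagst -w1 exchange_big; apply: eq_bigr => l _.
  have := uvec_orth l l; rewrite eqxx /= => H.
  transitivity (w l * \sum_x (uvec l x)^* * uvec l x); last by rewrite H mulr1.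
  rewrite mulr_sumr; apply: eq_bigr => x _; ring.
Qed.

Lemma diagst_perm (w : T -> C) :
  (forall s k, w (permute_idx s k) = w k) -> perm_invariant (diagst w).
Proof.
move=> wp s x y; rewrite /diagst (reindex_inj (@permute_idx_inj s)) /=.
by apply: eq_bigr => l _; rewrite !uvec_perm wp.
Qed.

End Tensor.


Section Spec.
Variable R : rcfType.
Local Notation C := (R[i]).
Variable D : nat.
Variables (Om : 'M[C]_D) (psi : 'cV[C]_D).
Hypothesis HV : verification_operator Om psi.

Lemma adj_tc m n (A : 'M[C]_(m, n)) : adj A = map_mx Num.conj A^T.
Proof. by apply/matrixP => i j; rewrite !mxE. Qed.

Definition SP := spectralmx Om.
Definition SPt := adj SP.
Definition lam (j : 'I_D) : C := spectral_diag Om 0 j.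

Lemma Om_normal : Om \is normalmx.
Proof.
case: HV => _ Hadj _ _ _.
by apply/eqP; rewrite -adj_tc Hadj.
Qed.

Lemma OmE : Om = SPt *m diag_mx (spectral_diag Om) *m SP.
Proof.
have := orthomx_spectralP Om_normal.
rewrite invmx_unitary ?spectral_unitarymx // => H.
by rewrite {1}H /SPt adj_tc.
Qed.

Lemma PPt : SP *m SPt = 1%:M.
Proof. by rewrite /SPt adj_tc; apply/eqP; exact: spectral_unitarymx. Qed.

Lemma PtP : SPt *m SP = 1%:M.
Proof.
rewrite /SPt adj_tc -invmx_unitary ?spectral_unitarymx //.
by rewrite mulVmx // spectral_unit.
Qed.

Lemma PO : SP *m Om = diag_mx (spectral_diag Om) *m SP.
Proof. by rewrite [in LHS]OmE !mulmxA PPt mul1mx. Qed.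

Lemma OPt : Om *m SPt = SPt *m diag_mx (spectral_diag Om).
Proof. by rewrite [in LHS]OmE -!mulmxA PPt mulmx1. Qed.

Definition ev (j a : 'I_D) : C := SPt a j.

Lemma ev_orth j l : \sum_a (ev j a)^* * ev l a = (j == l)%:R.
Proof.
have := congr1 (fun M : 'M[C]_D => M j l) PPt; rewrite !mxE => <-.
by apply: eq_bigr => a _; rewrite /ev /SPt !mxE conjCK.
Qed.

Lemma ev_compl a b : \sum_j ev j a * (ev j b)^* = (a == b)%:R.
Proof.
have := congr1 (fun M : 'M[C]_D => M a b) PtP; rewrite !mxE => <-.
by apply: eq_bigr => j _; rewrite /ev /SPt !mxE conjCK.
Qed.

Lemma Om_entry a b : Om a b = \sum_j lam j * ev j a * (ev j b)^*.
Proof.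
rewrite {1}OmE mul_mx_diag mxE; apply: eq_bigr => j _.
by rewrite !mxE /ev /lam /SPt !mxE conjCK; ring.
Qed.

Lemma id_entry a b : (1%:M : 'M[C]_D) a b = \sum_j 1 * ev j a * (ev j b)^*.
Proof. rewrite mxE -ev_compl; by apply: eq_bigr => j _; rewrite mul1r. Qed.

Definition vj (j : 'I_D) : 'cV[C]_D := col j SPt.


Lemma vj_orth j l : (adj (vj j) *m vj l) 0 0 = (j == l)%:R.
Proof.
rewrite -ev_orth mxE; apply: eq_bigr => a _; by rewrite !mxE /ev /SPt !mxE.
Qed.

Lemma vj_norm j : (adj (vj j) *m vj j) 0 0 = 1.
Proof. by rewrite vj_orth eqxx. Qed.

Lemma lam_quad j : (adj (vj j) *m Om *m vj j) 0 0 = lam j.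
Proof.
have E : SP *m Om *m SPt = diag_mx (spectral_diag Om) by rewrite PO -mulmxA PPt mulmx1.
have := congr1 (fun M : 'M[C]_D => M j j) E; rewrite [in RHS]mxE eqxx mulr1n /lam => <-.
rewrite !mxE; apply: eq_bigr => b _; rewrite !mxE /vj /SPt.
congr (_ * _); apply: eq_bigr => a _; by rewrite !mxE conjCK.
Qed.

Lemma lam_ge0 j : 0 <= lam j.
Proof.
case: HV => _ _ Hpos _ _; have /andP [H _] := Hpos (vj j).
by rewrite -lam_quad.
Qed.

Lemma lam_le1 j : lam j <= 1.
Proof.
case: HV => _ _ Hpos _ _; have /andP [_ H] := Hpos (vj j).
by rewrite -lam_quad -(vj_norm j).
Qed.

Lemma Om_vj j : Om *m vj j = lam j *: vj j.
Proof.
apply/matrixP => a z; rewrite (ord1 z).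
have := congr1 (fun M : 'M[C]_D => M a j) OPt; rewrite mul_mx_diag !mxE => E.
rewrite -[RHS]mulrC -E; apply: eq_bigr => b _; by rewrite !mxE.
Qed.

Lemma lam_eigen j : eigenvalue Om (lam j).
Proof.
apply/eigenvalueP; exists (row j SP).
  rewrite -row_mul PO; apply/rowP => b; rewrite !mxE.
  rewrite (bigD1 j) //= big1 ?addr0; first by rewrite !mxE eqxx mulr1n.
  by move=> i /negbTE ni; rewrite !mxE eq_sym ni mulr0n mul0r.
apply/negP => /eqP H0.
have := congr1 (fun M : 'M[C]_D => M j j) PPt; rewrite !mxE eqxx /= big1.
  by move/eqP; rewrite eq_sym oner_eq0.
move=> a _; have := congr1 (fun M : 'M[C]_(1,D) => M 0 a) H0; rewrite !mxE => ->; by rewrite mul0r.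
Qed.

Lemma eigen_lam a : eigenvalue Om a -> exists j, lam j = a.
Proof.
move/eigenvalueP => [v Hv vn0].
pose z := v *m SPt.
have Hz : z *m diag_mx (spectral_diag Om) = a *: z.
  by rewrite /z -mulmxA -OPt mulmxA Hv scalemxAl.
have zn0 : z != 0.
  apply: contraNneq vn0 => z0.
  by rewrite -[v]mulmx1 -PtP mulmxA -/z z0 mul0mx.
have [j Hj] : exists j, z 0 j != 0.
  apply/existsP; rewrite -negb_forall; apply: contra zn0 => /forallP H.
  by apply/eqP/rowP => k; rewrite (eqP (H k)) mxE.
exists j; have := congr1 (fun M : 'M[C]_(1,D) => M 0 j) Hz; rewrite mul_mx_diag [LHS]mxE [RHS]mxE.
move=> E; apply: (mulIf Hj); rewrite mulrC; exact: E. Qed.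


Lemma adjZ_quad (c c' : C) (u : 'cV[C]_D) :
  (adj (c *: u) *m (c' *: u)) 0 0 = c^* * c' * (adj u *m u) 0 0.
Proof.
rewrite !mxE mulr_sumr; apply: eq_bigr => a _; rewrite !mxE rmorphM /=; ring.
Qed.

Lemma exists_j0 : exists j0, lam j0 = 1.
Proof.
case: HV => Hn _ _ Hfix _.
pose z := SP *m psi.
have Hz : diag_mx (spectral_diag Om) *m z = z by rewrite /z mulmxA -PO -mulmxA Hfix.
have zn0 : z != 0.
  apply/negP => /eqP z0.
  have : psi = 0 by rewrite -[psi]mul1mx -PtP -mulmxA -/z z0 mulmx0.
  move=> p0; move: Hn; rewrite p0 mulmx0 mxE => /eqP; by rewrite eq_sym oner_eq0.
have [j Hj] : exists j, z j 0 != 0.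
  apply/existsP; rewrite -negb_forall; apply: contra zn0 => /forallP H.
  by apply/eqP/colP => k; rewrite (eqP (H k)) mxE.
exists j; have := congr1 (fun M : 'M[C]_(D,1) => M j 0) Hz; rewrite mul_diag_mx [LHS]mxE.
move=> E; apply: (mulIf Hj); rewrite mul1r; exact: E.
Qed.

Lemma lam1_psi j : lam j = 1 -> exists c, vj j = c *: psi.
Proof.
move=> H1; case: HV => _ _ _ _ Hnd; apply: Hnd.
by rewrite Om_vj H1 scale1r.
Qed.

Lemma lam1_uniq j l : lam j = 1 -> lam l = 1 -> j = l.
Proof.
move=> Hj Hl; apply/eqP; case: (eqVneq j l) => // njl.
have [c Hc] := lam1_psi Hj; have [c' Hc'] := lam1_psi Hl.
have := vj_orth j l; rewrite (negbTE njl) Hc Hc' adjZ_quad.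
have := vj_norm j; rewrite Hc adjZ_quad => N1.
have := vj_norm l; rewrite Hc' adjZ_quad => N2.
case: HV => Hn _ _ _ _; rewrite Hn mulr1 in N1 N2 *.
move=> E; have /eqP : c^* * c' = 0 by rewrite -[LHS]mulr1 E. rewrite mulf_eq0 => /orP [/eqP c0|/eqP c0].
  by move: N1; rewrite c0 !(mulr0, mul0r) => /eqP; rewrite eq_sym oner_eq0.
by move: N2; rewrite c0 !(mulr0, mul0r) => /eqP; rewrite eq_sym oner_eq0. Qed.

Lemma psi_proj j0 : lam j0 = 1 -> forall a b,
  (psi *m adj psi) a b = 1 * ev j0 a * (ev j0 b)^*.
Proof.
move=> H a b; have [c Hc] := lam1_psi H.
have := vj_norm j0; rewrite Hc adjZ_quad; case: HV => Hn _ _ _ _; rewrite Hn mulr1 => N1.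
have Ea : forall a, ev j0 a = c * psi a 0.
  move=> a'; have := congr1 (fun M : 'M[C]_(D,1) => M a' 0) Hc; rewrite [in LHS]mxE [in RHS]mxE => <-; by [].
rewrite !Ea mxE big_ord1 !mxE rmorphM /= mul1r.
transitivity ((c^* * c) * (psi a 0 * (psi b 0)^*)); first by rewrite N1 mul1r.
ring.
Qed.

End Spec.


Section Main.
Variable R : rcfType.
Local Notation C := (R[i]).
Variables (D N : nat).
Local Notation T := (tidx D N).
Variables (Om : 'M[C]_D) (psi : 'cV[C]_D).
Hypothesis HV : verification_operator Om psi.

Local Notation lam := (lam Om).
Local Notation ev := (ev Om).
Local Notation u := (uvec ev).

Definition G (k : T) : C := \prod_(i < N.+1 | i != ord_max) lam (k i).

Lemma G_ge0 k : 0 <= G k.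
Proof. by apply: prodr_ge0 => i _; exact: (lam_ge0 HV). Qed.

Lemma G_le1 k : G k <= 1.
Proof.
have := @ler_prod C _ (index_enum 'I_N.+1) (fun i => i != ord_max) (fun i => lam (k i)) (fun=> 1).
move=> H; apply: le_trans (H _) _; last by rewrite big1.
by move=> i _; rewrite (lam_ge0 HV) (lam_le1 HV). Qed.

Lemma trK_tens (B : 'M[C]_D) (b : 'I_D -> C) rho :
  (forall a a', B a a' = \sum_j b j * ev j a * (ev j a')^*) ->
  trK (tens_last Om B) rho = \sum_(k : T) (G k * b (k ord_max)) * Qf rho (u k).
Proof.
move=> HB; apply: trK_decomp => x y.
rewrite tens_last_prod (@prod_decomp _ _ _ ev (fun i j => if i == ord_max then b j else lam j) (fun i a a' => (if i == ord_max then B else Om) a a')).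
  apply: eq_bigr => k _; congr (_ * _ * _).
  rewrite (bigD1 ord_max) //= eqxx mulrC /G; congr (_ * _).
  by apply: eq_bigr => i /negbTE ->.
move=> i a a'; case: (i == ord_max); first exact: HB.
exact: (Om_entry HV).
Qed.

Lemma prod_eq_nat (x y : T) : \prod_i (((x i == y i)%:R) : C) = (x == y)%:R.
Proof.
case: (eqVneq x y) => [->|nxy].
  by rewrite big1 // => i _; rewrite eqxx.
have [i Hi] : exists i, x i != y i.
  by apply/existsP; rewrite -negb_forall; apply: contra nxy => /forallP H; apply/eqP/ffunP => i; apply/eqP; exact: H.
by rewrite (bigD1 i) //= (negbTE Hi) mul0r.
Qed.

Lemma sum_q rho : density rho -> \sum_(k : T) Qf rho (u k) = 1.
Proof.
case=> _ _ Htr; rewrite -Htr.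
have H := @trK_decomp R D N ev (fun x y => (x == y)%:R) (fun _ => 1) rho.
rewrite (_ : \sum_k Qf rho (u k) = \sum_k 1 * Qf rho (u k)); last first.
  by apply: eq_bigr => k _; rewrite mul1r.
rewrite -H.
  rewrite /trK; apply: eq_bigr => x _; rewrite (bigD1 x) //= eqxx mul1r big1 ?addr0 //.
  by move=> y /negbTE; rewrite eq_sym => ->; rewrite mul0r.
move=> x y; rewrite -prod_eq_nat.
transitivity (\prod_i (1%:M : 'M[C]_D) (x i) (y i)).
  by apply: eq_bigr => i _; rewrite mxE.
rewrite (@prod_decomp _ _ _ ev (fun _ _ => 1) (fun _ a b => (1%:M : 'M[C]_D) a b)).
  by apply: eq_bigr => k _; rewrite big1.
move=> i a b /=; exact: id_entry. Qed.


Lemma p_decomp rho : p_rho Om rho = \sum_(k : T) (G k * 1) * Qf rho (u k).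
Proof. apply: (@trK_tens _ (fun _ => 1)) => a a'; exact: id_entry. Qed.

Variables (beta tau : C) (j0 : 'I_D).
Hypotheses (Hb : second_largest_eigenvalue Om beta) (Ht : smallest_eigenvalue Om tau)
  (Hj0 : lam j0 = 1).

Lemma f_decomp rho : f_rho Om psi rho =
   \sum_(k : T) (G k * (k ord_max == j0)%:R) * Qf rho (u k).
Proof.
apply: (@trK_tens _ (fun j => (j == j0)%:R))  => a a'; rewrite (psi_proj HV Hj0) (bigD1 j0) //= eqxx big1 ?addr0 //.
by move=> j /negbTE ->; rewrite !mul0r.
Qed.

Lemma lam_le_beta j : j != j0 -> lam j <= beta.
Proof.
move=> nj; case: Hb => _ _ H; apply: H; first exact: (lam_eigen HV).
by apply/eqP => H1; rewrite (lam1_uniq HV H1 Hj0) eqxx in nj.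
Qed.

Lemma tau_le_lam j : tau <= lam j.
Proof. by case: Ht => _ H; apply: H; exact: (lam_eigen HV). Qed.

Lemma beta_ge0 : 0 <= beta.
Proof.
case: Hb => Hbe _ _; have [j <-] := eigen_lam HV Hbe; exact: (lam_ge0 HV).
Qed.

Lemma tau_ge0 : 0 <= tau.
Proof.
case: Ht => Hte _; have [j <-] := eigen_lam HV Hte; exact: (lam_ge0 HV).
Qed.

Lemma G_le_betaN (k : T) : [forall i, k i != j0] -> G k <= beta ^+ N.
Proof.
move=> /forallP Ak.
have -> : beta ^+ N = \prod_(i < N.+1 | i != ord_max) beta.
  by rewrite prodr_const cardC1 card_ord.
apply: ler_prod => i _; rewrite (lam_ge0 HV) /=; exact: lam_le_beta.
Qed.


Definition hh (j : 'I_N.+1) (k : T) : bool :=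
  (lam (k j) == 0) && [forall i, (i != j) ==> (lam (k i) != 0)].

Lemma tperm_neq (j i : 'I_N.+1) :
  (tperm j ord_max i != ord_max) = (i != j).
Proof.
by rewrite -[X in _ != X](tpermL j ord_max) (inj_eq perm_inj).
Qed.

Lemma tperm_neq' (j i : 'I_N.+1) :
  (tperm j ord_max i != j) = (i != ord_max).
Proof.
by rewrite -[X in _ != X](tpermR j ord_max) (inj_eq perm_inj).
Qed.

Lemma hh_perm j k : hh ord_max (permute_idx (tperm j ord_max) k) = hh j k.
Proof.
rewrite /hh !ffunE tpermR; congr (_ && _).
apply/forallP/forallP => H i.
  apply/implyP => nij; have := H (tperm j ord_max i); rewrite ffunE tpermK tperm_neq nij.
  by [].
apply/implyP => nim; rewrite ffunE; have := H (tperm j ord_max i).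
by rewrite tperm_neq' nim.
Qed.

Lemma A_perm (s : 'S_N.+1) (k : T) :
  [forall i, permute_idx s k i != j0] = [forall i, k i != j0].
Proof.
apply/forallP/forallP => H i.
  by have := H (s^-1 i)%g; rewrite ffunE permKV.
by rewrite ffunE; exact: H.
Qed.

Lemma hh_sum (k : T) : \sum_(j < N.+1) ((hh j k)%:R : C) <= 1.
Proof.
case: (boolP [exists j, hh j k]) => [/existsP [j Hj]| /existsPn Hn].
  rewrite (bigD1 j) //= Hj big1 ?addr0 //.
  move=> j' nj'; case Hj': (hh j' k) => //.
  move: Hj Hj' => /andP [_ /forallP H] /andP [/eqP Z _].
  by move: (H j'); rewrite nj' Z eqxx.
by rewrite big1 // => j _; move: (Hn j) => /negbTE ->.
Qed.


Lemma upper (rho : T -> T -> C) : density rho -> perm_invariant rho ->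
  f_rho Om psi rho <= 0 -> p_rho Om rho <= delta_c N beta tau.
Proof.
move=> Hd Hp Hf.
pose q k := Qf rho (u k).
have q0 : forall k, 0 <= q k by case: Hd => _ Hpos _ k; exact: Hpos.
have q1 : \sum_k q k = 1 := sum_q Hd.
have qp : forall s k, q (permute_idx s k) = q k by move=> s k; exact: Qf_perm.
have Hz : forall k : T, k ord_max = j0 -> G k * q k = 0.
  move: Hf; rewrite f_decomp => Hf k Hk.
  have F0 : forall k : T, true -> 0 <= G k * (k ord_max == j0)%:R * q k.
    by move=> k' _; rewrite !mulr_ge0 ?G_ge0 ?ler0n.
  have Hs : \sum_k G k * (k ord_max == j0)%:R * q k = 0.
    by apply/le_anti; rewrite Hf /=; apply: sumr_ge0 => k' _; exact: F0.
  by move: (psumr_eq0P F0 Hs) => /(_ k erefl); rewrite Hk eqxx mulr1.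
pose A (k : T) := [forall i, k i != j0].
pose S := \sum_(k | ~~ A k) (hh ord_max k)%:R * q k.
have Hp1 : p_rho Om rho <= beta ^+ N * \sum_(k | A k) q k + S.
  rewrite p_decomp (bigID A) /=; apply: lerD.
    rewrite mulr_sumr; apply: ler_sum => k Ak; rewrite mulr1.
    by apply: ler_wpM2r; [exact: q0 | exact: G_le_betaN].
  apply: ler_sum => k nAk; rewrite mulr1.
  rewrite -/(q k); case: (eqVneq (q k) 0) => [->|qn0]; first by rewrite !mulr0.
  have [i Hi] : exists i, k i == j0.
    have : [exists i, ~~ (k i != j0)] by rewrite -negb_forall. by case/existsP => i; rewrite negbK => H; exists i.
  pose k' := permute_idx (tperm i ord_max) k.
  have Gk' : G k' = 0.
    have := Hz k'; rewrite ffunE tpermR (eqP Hi) qp => /(_ erefl) /eqP.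
    by rewrite mulf_eq0 (negbTE qn0) orbF => /eqP.
  have [m Hm] : exists m, lam (k m) == 0.
    move/eqP: Gk' => /prodf_eq0 [i' _]; rewrite ffunE => H; by exists (tperm i ord_max i').
  case Hh: (hh ord_max k).
    by rewrite mul1r; have := ler_wpM2r (q0 k) (G_le1 k); rewrite mul1r.
  suff -> : G k = 0 by rewrite !mul0r.
  apply/eqP/prodf_eq0; move: (negbT Hh); rewrite negb_and => /orP [Hmax|].
    exists m => //; by apply: contraNneq Hmax => <-.
  rewrite negb_forall => /existsP [i2]; rewrite negb_imply negbK => /andP [H1 H2].
  by exists i2.
have qAB : \sum_(k | A k) q k + \sum_(k | ~~ A k) q k = 1 by rewrite -q1 [RHS](bigID A).
have qA0 : 0 <= \sum_(k | A k) q k by apply: sumr_ge0 => k _.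
have qB0 : 0 <= \sum_(k | ~~ A k) q k by apply: sumr_ge0 => k _.
have bN0 : 0 <= beta ^+ N by apply: exprn_ge0; exact: beta_ge0.
have NS : (N.+1)%:R * S <= \sum_(k | ~~ A k) q k.
  have -> : (N.+1)%:R * S = \sum_(j < N.+1) \sum_(k | ~~ A k) (hh j k)%:R * q k.
    rewrite mulr_natl -[in LHS](card_ord N.+1) -sumr_const; apply: eq_bigr => j _.
    rewrite /S (reindex_inj (@permute_idx_inj D N (tperm j ord_max))) /=.
    apply: eq_big => k; first by rewrite /A A_perm.
    by move=> _; rewrite hh_perm qp.
  rewrite exchange_big /=; apply: ler_sum => k _.
  rewrite -mulr_suml; rewrite -[X in _ <= X]mul1r; apply: ler_wpM2r; first exact: q0.
  exact: hh_sum.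
rewrite /delta_c; case: ifP => Htau.
  have S0 : S = 0.
    rewrite /S big1 // => k _; case Hh: (hh ord_max k); last by rewrite mul0r.
    move: Hh => /andP [/eqP Z _]; have := tau_le_lam (k ord_max); rewrite Z => Hle.
    by move: (lt_le_trans Htau Hle); rewrite ltxx.
  apply: le_trans Hp1 _; rewrite S0 addr0 -[X in _ <= X]mulr1; apply: ler_wpM2l => //.
  by rewrite -qAB lerDl.
have SB : S <= (N.+1)%:R^-1 * \sum_(k | ~~ A k) q k by rewrite ler_pdivlMl ?ltr0Sn.
have inv0 : 0 <= ((N.+1)%:R : C)^-1 by rewrite invr_ge0 ler0n.
set d := (if _ then _ else _).
have [Hd1 Hd2] : beta ^+ N <= d /\ (N.+1)%:R^-1 <= d.
  rewrite /d; case: ifP => Hc; split => //.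
  move/negbT: Hc; rewrite -real_ltNge ?ger0_real // => /ltW //.
apply: le_trans Hp1 _; apply: le_trans (lerD (lexx _) SB) _.
apply: le_trans (_ : d * \sum_(k | A k) q k + d * \sum_(k | ~~ A k) q k <= d).
  by apply: lerD; apply: ler_wpM2r.
by rewrite -mulrDr qAB mulr1.
Qed.


Lemma sum_delta (F : T -> C) x : \sum_(k : T) F k * (k == x)%:R = F x.
Proof.
rewrite (bigD1 x) //= eqxx mulr1 big1 ?addr0 //.
by move=> k /negbTE ->; rewrite mulr0.
Qed.

Lemma diag_props (w : T -> C) : (forall k, 0 <= w k) -> \sum_k w k = 1 ->
  (forall s k, w (permute_idx s k) = w k) ->
  [/\ density (diagst ev w), perm_invariant (diagst ev w),
      f_rho Om psi (diagst ev w) = \sum_(k : T) G k * (k ord_max == j0)%:R * w k &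
      p_rho Om (diagst ev w) = \sum_(k : T) G k * 1 * w k].
Proof.
move=> w0 w1 wp; split.
- exact: (diagst_density (@ev_orth _ _ Om)).
- exact: diagst_perm.
- by rewrite f_decomp; apply: eq_bigr => k _; rewrite Qf_diag_uvec //; exact: ev_orth.
- by rewrite p_decomp; apply: eq_bigr => k _; rewrite Qf_diag_uvec //; exact: ev_orth.
Qed.

Lemma lowerA : exists rho : T -> T -> C, [/\ density rho, perm_invariant rho,
  f_rho Om psi rho <= 0 & p_rho Om rho = beta ^+ N].
Proof.
case: Hb => Hbe Hb1 _; have [jb Hjb] := eigen_lam HV Hbe.
pose kb : T := [ffun => jb].
pose w (k : T) : C := (k == kb)%:R.
have w0 : forall k, 0 <= w k by move=> k; exact: ler0n.
have w1 : \sum_k w k = 1.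
  by rewrite (bigD1 kb) //= /w eqxx big1 ?addr0 // => k /negbTE ->.
have wp : forall s k, w (permute_idx s k) = w k.
  move=> s k; rewrite /w.
  have E : permute_idx s kb = kb by apply/ffunP => i; rewrite !ffunE.
  by rewrite -{1}E (inj_eq (@permute_idx_inj D N s)).
have [Hd Hp Hf Hpr] := diag_props w0 w1 wp.
exists (diagst ev w); split => //.
  rewrite Hf /w (eq_bigr (fun k => G k * (k ord_max == j0)%:R * (k == kb)%:R)) //.
  rewrite sum_delta ffunE.
  have -> : (jb == j0) = false.
    by apply/negbTE; apply: contra_neq Hb1 => E; rewrite -Hjb E Hj0.
  by rewrite mulr0.
rewrite Hpr (eq_bigr (fun k => G k * 1 * (k == kb)%:R)) // sum_delta mulr1 /G.
under eq_bigr do rewrite ffunE Hjb.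
by rewrite prodr_const cardC1 card_ord.
Qed.


Lemma lowerB : tau = 0 -> exists rho : T -> T -> C, [/\ density rho, perm_invariant rho,
  f_rho Om psi rho <= 0 & p_rho Om rho = (N.+1)%:R^-1].
Proof.
move=> Ht0; case: Ht => Hte _; have [jt Hjt] := eigen_lam HV Hte.
rewrite Ht0 in Hjt.
have jt0 : jt != j0 by apply: contraTneq isT => E; move: Hj0; rewrite -E Hjt => /eqP; rewrite eq_sym oner_eq0.
pose km (m : 'I_N.+1) : T := [ffun i => if i == m then jt else j0].
pose inv : C := (N.+1)%:R^-1.
pose w (k : T) : C := inv * \sum_m (k == km m)%:R.
have inv0 : 0 <= inv by rewrite invr_ge0 ler0n.
have w0 : forall k, 0 <= w k.
  by move=> k; apply: mulr_ge0 => //; apply: sumr_ge0 => m _; exact: ler0n.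
have wsum : forall F : T -> C, \sum_k F k * w k = inv * \sum_m F (km m).
  move=> F; transitivity (\sum_k \sum_m inv * (F k * (k == km m)%:R)).
    apply: eq_bigr => k _; rewrite /w mulr_sumr mulr_sumr; apply: eq_bigr => m _; ring.
  rewrite exchange_big mulr_sumr; apply: eq_bigr => m _; rewrite -mulr_sumr sum_delta //.
have w1 : \sum_k w k = 1.
  rewrite (eq_bigr (fun k => 1 * w k)); last by move=> k _; rewrite mul1r.
  rewrite wsum sumr_const card_ord /inv mulVf //.
  by rewrite -[_ *+ _]mulr_natr mul1r pnatr_eq0.
have wp : forall s k, w (permute_idx s k) = w k.
  move=> s k; rewrite /w; congr (_ * _).
  rewrite [RHS](reindex_inj (@perm_inj _ s)) /=; apply: eq_bigr => m _.
  have E : permute_idx s (km (s m)) = km m.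
    by apply/ffunP => i; rewrite !ffunE (inj_eq perm_inj).
  by rewrite -E (inj_eq (@permute_idx_inj D N s)).
have Gkm : forall m, G (km m) = (m == ord_max)%:R.
  move=> m; case: (eqVneq m ord_max) => [->|nm].
    by rewrite /G big1 // => i ni; rewrite ffunE (negbTE ni).
  apply/eqP/prodf_eq0; exists m => //; by rewrite ffunE eqxx Hjt.
have [Hd Hp Hf Hpr] := diag_props w0 w1 wp.
exists (diagst ev w); split => //.
  rewrite Hf (wsum (fun k => G k * (k ord_max == j0)%:R)) big1 ?mulr0 // => m _; rewrite Gkm ffunE.
  case: (eqVneq m ord_max) => [E|nm]; first by rewrite (negbTE jt0) mulr0.
  by rewrite mul0r.
rewrite Hpr (wsum (fun k => G k * 1)) (bigD1 ord_max) //= big1 ?addr0 ?Gkm ?eqxx ?mulr1 //.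
by move=> m nm; rewrite Gkm (negbTE nm) mul0r.
Qed.

End Main.


Theorem lemma1 (R : rcfType) (D N : nat) (Om : 'M[R[i]]_D) (psi : 'cV[R[i]]_D)
    (beta tau : R[i]) :
  (2 <= D)%N ->
  verification_operator Om psi ->
  second_largest_eigenvalue Om beta ->
  smallest_eigenvalue Om tau ->
  (1 <= N)%N ->
  is_eta N Om psi 0 (delta_c N beta tau).
Proof.
move=> _ HV Hb Ht _.
have [j0 Hj0] := exists_j0 HV.
split.
  rewrite /delta_c; case: ifP => Htau.
    exact: (@lowerA R D N Om psi HV beta j0 Hb Hj0).
  have Ht0 : tau = 0.
    have := tau_ge0 HV Ht; rewrite le0r => /orP [/eqP //|]; by rewrite Htau.
  case: ifP => _.
    exact: (@lowerB R D N Om psi HV tau j0 Ht Hj0 Ht0).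
  exact: (@lowerA R D N Om psi HV beta j0 Hb Hj0).
move=> rho Hd Hp Hf; exact: (@upper R D N Om psi HV beta tau j0 Hb Ht Hj0 rho Hd Hp Hf).
Qed.
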